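(* Let $R$ be an associative ring with identity and let $e_1, e_2$ be idempotents of $R$ with $e_1 \sim_o e_2$. Then there is an inner automorphism of $R$ (a map $x \mapsto wxw^{-1}$ for some unit $w \in R$) sending $e_1$ to $e_2$.
   Context: Let $\gamma(R)$ be the directed graph whose vertices are the idempotents of $R$, with an edge $f \to g$ if and only if $fg = 0$; $g$ is then called an out-neighbour of $f$. For idempotents $e, e'$, write $e \sim_o e'$ if they have the same set of out-neighbours in $\gamma(R)$, i.e. for every idempotent $f \in R$, $ef = 0 \iff e'f = 0$. *)

(* Defs.v *)
From mathcomp Require Import all_boot all_algebra.
Set Implicit Arguments. Unset Strict Implicit. Unset Printing Implicit Defensive.
Import GRing.Theory.
Local Open Scope ring_scope.

Definition is_idem (R : pzRingType) (e : R) : Prop := e * e = e.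

Definition out_neighbour (R : pzRingType) (f g : R) : Prop :=
  is_idem f /\ is_idem g /\ f * g = 0.

(* e ~_o e' : same set of out-neighbours in gamma(R) *)
Definition same_out (R : pzRingType) (e e' : R) : Prop :=
  forall f : R, is_idem f -> (e * f = 0 <-> e' * f = 0).

Definition inverse_pair (R : pzRingType) (w w' : R) : Prop :=
  w * w' = 1 /\ w' * w = 1.

(* Main.v *)
Require Import Defs.
From mathcomp Require Import all_boot all_algebra.
Local Open Scope ring_scope.
Import GRing.Theory.

Theorem theorem5 (R : pzRingType) (e1 e2 : R) :
  is_idem e1 -> is_idem e2 -> same_out e1 e2 ->
  exists w w' : R, inverse_pair w w' /\ w * e1 * w' = e2.
Proof.
move=> h1 h2 hs; rewrite /is_idem in h1 h2.
have i1 : is_idem (1 - e1) by rewrite /is_idem mulrBl mul1r mulrBr mulr1 h1 subrr subr0.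
have i2 : is_idem (1 - e2) by rewrite /is_idem mulrBl mul1r mulrBr mulr1 h2 subrr subr0.
have z1 : e1 * (1 - e1) = 0 by rewrite mulrBr mulr1 h1 subrr.
have z2 : e2 * (1 - e2) = 0 by rewrite mulrBr mulr1 h2 subrr.
have a21 : e2 * e1 = e2.
  have := (proj1 (hs _ i1) z1); rewrite mulrBr mulr1 => /eqP; rewrite subr_eq0 => /eqP <-//.
have a12 : e1 * e2 = e1.
  have := (proj2 (hs _ i2) z2); rewrite mulrBr mulr1 => /eqP; rewrite subr_eq0 => /eqP <-//.
set a := e2 - e1.
have ha1 : a * e1 = a by rewrite /a mulrBl a21 h1.
have h1a : e1 * a = 0 by rewrite /a mulrBr a12 h1 subrr.
have h2a : e2 * a = 0 by rewrite /a mulrBr a21 h2 subrr.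
have ha2 : a * e2 = a by rewrite /a mulrBl a12 h2.
have aa : a * a = 0 by rewrite {1}/a mulrBr ha2 ha1 subrr.
exists (1 + a), (1 - a); split; first split.
- by rewrite mulrBr mulr1 mulrDl mul1r aa addr0 addrK.
- by rewrite mulrDr mulr1 mulrBl mul1r aa subr0 subrK.
have ea : e1 + a = e2 by rewrite /a addrC subrK.
by rewrite mulrDl mul1r ha1 ea mulrBr mulr1 h2a subr0.
Qed.
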